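(* Let $T:M_d\to M_d$ be completely positive with $T(I)\le I$ and finite stabilization index, and let $Q$ be its orbit-support projection. Then \[ \mathrm{rank}(Q)\le\mathrm{rank}(d(T))+\mathrm{rank}(T(I))-\dim\big(\mathrm{Ran}(d(T))\cap\mathrm{Ran}(T(I))\big), \] and in particular $\mathrm{rank}(Q)\le\min\{d,\ \mathrm{rank}(d(T))+\mathrm{rank}(T(I))\}$.
   Context: $d(T)=I-T(I)$; $n_T=\min\{n\ge1: T^n(d(T))=0\}$. For positive semidefinite $x$, $\mathrm{supp}(x)$ is the orthogonal projection onto $\mathrm{Ran}(x)$. The orbit-support projection is $Q=\bigvee_{k<n_T}\mathrm{supp}(T^k(d(T)))$. *)

(* Defs.v *)
From HB Require Import structures.
From mathcomp Require Import all_boot all_order all_algebra.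
Set Implicit Arguments. Unset Strict Implicit. Unset Printing Implicit Defensive.
Import Order.TTheory GRing.Theory Num.Theory.
Local Open Scope ring_scope.

(* Matrices over a numeric algebraically closed field C (e.g. the complex
   numbers); M_d is 'M[C]_d. *)
Section Defs.
Variable C : numClosedFieldType.

Definition ctr m n (A : 'M[C]_(m, n)) : 'M[C]_(n, m) := \matrix_(i, j) (A j i)^*.

Definition psd m (A : 'M[C]_m) : Prop :=
  forall v : 'cV[C]_m, 0 <= (ctr v *m A *m v) 0 0.

Definition loewner_le m (A B : 'M[C]_m) : Prop := psd (B - A).

Definition completely_positive d (T : 'M[C]_d -> 'M[C]_d) : Prop :=
  forall (n : nat) (X : 'I_n -> 'I_n -> 'M[C]_d),
    psd (\mxblock_(i < n, j < n) X i j) ->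
    psd (\mxblock_(i < n, j < n) T (X i j)).

Definition defect d (T : 'M[C]_d -> 'M[C]_d) : 'M[C]_d := 1%:M - T 1%:M.

Definition stab_index d (T : 'M[C]_d -> 'M[C]_d) (n : nat) : Prop :=
  (1 <= n)%N /\ iter n T (defect T) = 0 /\
  forall m, (1 <= m < n)%N -> iter m T (defect T) <> 0.

(* Range (column space) of A, encoded as a row space: Ran(A) = rowspace(A^T) *)
Definition Ran m n (A : 'M[C]_(m, n)) : 'M[C]_(n, m) := A^T.

Definition orth_proj d (P : 'M[C]_d) : Prop := P *m P = P /\ ctr P = P.

Definition is_supp d (x P : 'M[C]_d) : Prop :=
  orth_proj P /\ (Ran P == Ran x)%MS.

Definition is_join_proj d (n : nat) (P : nat -> 'M[C]_d) (Q : 'M[C]_d) : Prop :=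
  orth_proj Q /\ (Ran Q == \sum_(k < n) Ran (P k))%MS.

End Defs.

(* Main.v *)
Require Import Defs.
From HB Require Import structures.
From mathcomp Require Import all_boot all_order all_algebra.
From mathcomp Require Import ring.
Import Order.TTheory GRing.Theory Num.Theory.
Local Open Scope ring_scope.
Set Implicit Arguments. Unset Strict Implicit.

Section Helpers.
Variable C : numClosedFieldType.

Lemma ctrK m n (A : 'M[C]_(m, n)) : ctr (ctr A) = A.
Proof. by apply/matrixP => i j; rewrite !mxE conjCK. Qed.

Lemma ctrD m n (A B : 'M[C]_(m, n)) : ctr (A + B) = ctr A + ctr B.
Proof. by apply/matrixP => i j; rewrite !mxE rmorphD. Qed.

Lemma ctrZ m n (a : C) (A : 'M[C]_(m, n)) : ctr (a *: A) = a^* *: ctr A.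
Proof. by apply/matrixP => i j; rewrite !mxE rmorphM. Qed.

Lemma ctr_mul m n p (A : 'M[C]_(m, n)) (B : 'M[C]_(n, p)) :
  ctr (A *m B) = ctr B *m ctr A.
Proof.
apply/matrixP => i j; rewrite !mxE rmorph_sum; apply: eq_bigr => k _.
by rewrite !mxE rmorphM mulrC.
Qed.

Definition form m (A : 'M[C]_m) (x y : 'cV[C]_m) : C := (ctr x *m A *m y) 0 0.

Lemma formDl m (A : 'M[C]_m) x y z : form A (x + y) z = form A x z + form A y z.
Proof. by rewrite /form ctrD !mulmxDl mxE. Qed.
Lemma formDr m (A : 'M[C]_m) x y z : form A x (y + z) = form A x y + form A x z.
Proof. by rewrite /form mulmxDr mxE. Qed.
Lemma formZl m (A : 'M[C]_m) a x z : form A (a *: x) z = a^* * form A x z.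
Proof. by rewrite /form ctrZ -!scalemxAl mxE. Qed.
Lemma formZr m (A : 'M[C]_m) a x z : form A x (a *: z) = a * form A x z.
Proof. by rewrite /form -scalemxAr mxE. Qed.
Lemma formBm m (A B : 'M[C]_m) x z : form (A - B) x z = form A x z - form B x z.
Proof. by rewrite /form mulmxBr mulmxBl !mxE. Qed.

Lemma psd_form m (A : 'M[C]_m) : psd A <-> forall v, 0 <= form A v v.
Proof. by []. Qed.

Lemma quad0 (X c : C) : 0 <= c ->
  (forall s : C, s \is Num.real -> 0 <= s * X + s * s * c) -> X = 0.
Proof.
move=> c0 H.
have Xr : X \is Num.real.
  have := H 1 (rpred1 _); rewrite !mul1r => /ger0_real Hr.
  by rewrite -[X](addrK c) rpredB // ger0_real.
have c1 : c + 1 != 0.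
  by rewrite gt_eqF // ltr_wpDl.
have sr : - X / (c + 1) \is Num.real.
  by apply: rpredM; [rewrite rpredN | rewrite rpredV rpredD ?rpred1 ?ger0_real].
have := H _ sr.
have -> : - X / (c + 1) * X + - X / (c + 1) * (- X / (c + 1)) * c
   = - ((X / (c + 1)) ^+ 2) by field.
have : X / (c + 1) \is Num.real.
  by apply: rpredM => //; rewrite rpredV rpredD ?rpred1 ?ger0_real.
rewrite realEsqr oppr_ge0 => h1 h2.
have /eqP : (X / (c + 1)) ^+ 2 = 0 by apply/le_anti; rewrite h1 h2.
by rewrite expf_eq0 /= mulf_eq0 invr_eq0 (negPf c1) orbF => /eqP.
Qed.

Lemma psd_form0 m (A : 'M[C]_m) w u : psd A -> form A w w = 0 -> form A w u = 0.
Proof.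
move=> pA w0; set a := form A u w; set b := form A w u; set c := form A u u.
have c0 : 0 <= c by exact: pA.
have f t : 0 <= t * b + t^* * (a + t * c).
  have : 0 <= form A (w + t *: u) (w + t *: u) by exact: pA.
  by rewrite formDl !formDr !formZl !formZr w0 add0r -mulrDr.
have h1 : a + b = 0.
  apply: (quad0 c0) => s sr; have := f s.
  have cs : s^* = s by exact: conj_Creal.
  by rewrite cs; congr (0 <= _); ring.
have h2 : 'i * (b - a) = 0.
  apply: (quad0 c0) => s sr; have := f (s * 'i).
  have cs : s^* = s by exact: conj_Creal.
  have ci : 'i^* = - 'i :> C by exact: conjCi.
  have cm : (s * 'i)^* = s^* * 'i^* by exact: rmorphM.
  rewrite cm cs ci; congr (0 <= _).
  have ii : 'i * 'i = -1 :> C by rewrite -expr2 sqrCi.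
  transitivity (s * s * c * - ('i * 'i) + s * ('i * (b - a))); first ring.
  by rewrite ii opprK mulr1 addrC.
move/eqP: h2; rewrite mulf_eq0 (negPf (neq0Ci C)) /= subr_eq0 => /eqP hba.
move: h1; rewrite hba -mulr2n => /eqP; rewrite mulrn_eq0 /= => /eqP //.
Qed.


Lemma psd_rowker m (A : 'M[C]_m) w : psd A -> form A w w = 0 -> ctr w *m A = 0.
Proof.
move=> pA w0; set r := ctr w *m A.
have h : (r *m ctr r) 0 0 = 0 by have := psd_form0 (ctr r) pA w0; rewrite /form -/r.
move: h; rewrite mxE => /eqP; rewrite psumr_eq0 => [/allP H|j _]; last first.
  have -> : ctr r j 0 = (r 0 j)^* by rewrite mxE.
  exact: mul_conjC_ge0.
apply/matrixP => i j; rewrite ord1 [X in _ = X]mxE.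
have /implyP := H j (mem_index_enum _) => /(_ isT).
have -> : ctr r j 0 = (r 0 j)^* by rewrite mxE.
move=> e; apply/eqP; rewrite -(mul_conjC_eq0 (r 0 j)); exact: e.
Qed.

Lemma psd_sub_ker m (A B : 'M[C]_m) (w : 'cV[C]_m) :
  psd A -> psd (B - A) -> ctr w *m B = 0 -> ctr w *m A = 0.
Proof.
move=> pA pBA wB; apply: psd_rowker => //.
have hB : form B w w = 0 by rewrite /form wB mul0mx mxE.
have h1 : 0 <= form A w w by exact: pA.
have : 0 <= form (B - A) w w by exact: pBA.
rewrite formBm hB sub0r oppr_ge0 => h2.
by apply/le_anti; rewrite h1 h2.
Qed.

Lemma psd_Ran m (A B : 'M[C]_m) :
  psd A -> psd (B - A) -> (Ran A <= Ran B)%MS.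
Proof.
move=> pA pBA; rewrite /Ran submxE; apply/eqP/matrixP => i j.
have key : forall v : 'cV[C]_m, B^T *m v = 0 -> A^T *m v = 0.
  move=> v Bv.
  have e : ctr (ctr v^T) = v^T by rewrite ctrK.
  have : ctr (ctr v^T) *m B = 0.
    by rewrite e -[B]trmxK -trmx_mul Bv trmx0.
  move/(psd_sub_ker pA pBA); rewrite e => h.
  by rewrite -[v]trmxK -trmx_mul h trmx0.
have hK : B^T *m cokermx B^T = 0 := mulmx_coker _.
move: hK; set K := cokermx B^T => hK.
have := key (col j K).
rewrite colE mulmxA hK mul0mx => /(_ erefl) h.
move: h; rewrite mulmxA -colE => h.
have e : (A^T *m K) i j = col j (A^T *m K) i 0 by rewrite [RHS]mxE.
by rewrite e h !mxE.
Qed.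


Lemma psd_congr m m' (M : 'M[C]_m) (S : 'M[C]_(m, m')) :
  psd M -> psd (ctr S *m M *m S).
Proof.
move=> pM v; have := pM (S *m v).
by rewrite ctr_mul !mulmxA.
Qed.

Lemma psd_reindex m m' (M : 'M[C]_m) (f : 'I_m' -> 'I_m) :
  psd M -> psd (\matrix_(i, j) M (f i) (f j)).
Proof.
move=> pM; set S : 'M[C]_(m, m') := \matrix_(a, j) ((f j == a)%:R).
suff -> : \matrix_(i, j) M (f i) (f j) = ctr S *m M *m S by exact: psd_congr.
apply/matrixP => i j; rewrite [RHS]mxE (bigD1 (f j)) //= big1 => [|b /negPf hb]; last first.
  by rewrite [S _ _]mxE eq_sym hb mulr0.
rewrite [S _ _]mxE eqxx mulr1 addr0.
rewrite [LHS]mxE [RHS]mxE (bigD1 (f i)) //= big1 => [|a /negPf ha].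
  by rewrite /ctr [X in X * _]mxE [S _ _]mxE eqxx conjC1 mul1r addr0.
by rewrite /ctr [X in X * _]mxE [S _ _]mxE eq_sym ha conjC0 mul0r.
Qed.

End Helpers.

Section Iter.
Variable C : numClosedFieldType.
Variable d : nat.
Variable T : 'M[C]_d -> 'M[C]_d.
Hypothesis lT : linear T.
Hypothesis cpT : completely_positive T.

Lemma iter_lin k a u v : iter k T (a *: u + v) = a *: iter k T u + iter k T v.
Proof. by elim: k => //= k ->; rewrite lT. Qed.

Lemma iterB k u v : iter k T (u - v) = iter k T u - iter k T v.
Proof. by rewrite addrC -scaleN1r iter_lin scaleN1r addrC. Qed.

Lemma psd_T X : psd X -> psd (T X).
Proof.
move=> pX.
have h1 : psd (\mxblock_(i < 1, j < 1) X).
  have := psd_reindex (fun s : 'I_(\sum_(i < 1) d) => (tagnat.sig2 s : 'I_d)) pX.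
  by congr psd; apply/matrixP => s t; rewrite !mxE.
have := psd_reindex (fun k : 'I_d => @tagnat.Rank 1 (fun _ => d) ord0 k) (cpT h1).
congr psd; apply/matrixP => k l; rewrite !mxE.
have e : forall k : 'I_d, tagnat.sig2 (@tagnat.Rank 1 (fun _ => d) ord0 k) = k.
  by move=> k'; apply: val_inj; rewrite tagnat.Rank2K.
by rewrite !e.
Qed.


Lemma psd1 : psd (1%:M : 'M[C]_d).
Proof.
move=> v; rewrite mulmx1 mxE; apply: sumr_ge0 => j _.
rewrite mxE mulrC; exact: mul_conjC_ge0.
Qed.

Lemma psd0 m : psd (0 : 'M[C]_m).
Proof. by move=> v; rewrite mulmx0 mul0mx mxE. Qed.

Lemma psdD m (A B : 'M[C]_m) : psd A -> psd B -> psd (A + B).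
Proof.
move=> pA pB v; rewrite mulmxDr mulmxDl mxE.
by apply: addr_ge0; [exact: pA | exact: pB].
Qed.

Lemma psd_iter k X : psd X -> psd (iter k T X).
Proof. by move=> pX; elim: k => //= k IH; exact: psd_T. Qed.

Hypothesis hle : loewner_le (T 1%:M) 1%:M.

Lemma psdD_ : psd (defect T).
Proof. exact: hle. Qed.

Lemma claimA k : psd (T 1%:M - iter k.+1 T 1%:M).
Proof.
elim: k => [|k IH]; first by rewrite /= subrr; exact: psd0.
have e : iter k.+1 T (defect T) = iter k.+1 T 1%:M - iter k.+2 T 1%:M.
  by rewrite /defect iterB -iterSr.
have -> : T 1%:M - iter k.+2 T 1%:M
   = (T 1%:M - iter k.+1 T 1%:M) + iter k.+1 T (defect T).
  by rewrite e addrA subrK.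
by apply: psdD => //; apply: psd_iter; exact: psdD_.
Qed.

Lemma claimB k : psd (T 1%:M - iter k.+1 T (defect T)).
Proof.
have e : iter k.+1 T (defect T) = iter k.+1 T 1%:M - iter k.+2 T 1%:M.
  by rewrite /defect iterB -iterSr.
have -> : T 1%:M - iter k.+1 T (defect T)
   = (T 1%:M - iter k.+1 T 1%:M) + iter k.+2 T 1%:M.
  by rewrite e opprB addrCA addrC.
by apply: psdD; [exact: claimA | apply: psd_iter; exact: psd1].
Qed.

End Iter.

From mathcomp Require Import zify.

Theorem proposition8p29 (C : numClosedFieldType) (d : nat)
  (T : 'M[C]_d -> 'M[C]_d) (nT : nat) (P : nat -> 'M[C]_d) (Q : 'M[C]_d) :
  linear T ->
  completely_positive T ->
  loewner_le (T 1%:M) 1%:M ->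
  stab_index T nT ->
  (forall k, (k < nT)%N -> is_supp (iter k T (defect T)) (P k)) ->
  is_join_proj nT P Q ->
  ((\rank Q <= \rank (defect T) + \rank (T 1%:M)
               - \rank (Ran (defect T) :&: Ran (T 1%:M))%MS)%N
   /\ (\rank Q <= minn d (\rank (defect T) + \rank (T 1%:M)))%N).
Proof.
move=> lT cpT hle _ hP [_ hQ].
have sub : (Ran Q <= Ran (defect T) + Ran (T 1%:M))%MS.
  case/andP: hQ => hQ1 _; apply: submx_trans hQ1 _.
  apply/sumsmx_subP => k _.
  have [_ /andP [hk _]] := hP k (ltn_ord k).
  apply: submx_trans hk _.
  case: (nat_of_ord k) => [|k'].
    exact: addsmxSl.
  apply: submx_trans (addsmxSr _ _).
  apply: psd_Ran; first by apply: psd_iter => //; exact: hle.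
  exact: claimB.
have r1 := mxrankS sub.
have r2 := mxrank_sum_cap (Ran (defect T)) (Ran (T 1%:M)).
have r3 := rank_leq_row Q.
move: r1 r2 r3; rewrite /Ran !mxrank_tr => r1 r2 r3.
split; first by lia.
rewrite leq_min; apply/andP; split; lia.
Qed.
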